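(* There is a partial order $(P,\leq_P)$, with first, second and third levels $P_1,P_2,P_3$, such that: (1) $P$ is locally countable, has size continuum and has height three; (2) $P_1$ has size continuum; (3) every countable subset of $P_1$ has an upper bound in $P_2$; (4) for every finite subset $Q$ of $P_1\cup P_2$ and every $q\in P_2$ not equal to any element of $Q$, there is an element of $P_3$ which is above every element of $Q$ but not above $q$.
   Context: A partial order is locally countable if every element has at most countably many strict predecessors; it has height $n$ if its longest chain has length exactly $n$. For a partial order of height three, the first level consists of elements with no strict predecessors, the second level of elements not in the first level whose strict predecessors all lie in the first level, and the third level of the remaining elements (those not in the first two levels, all of whose strict predecessors lie in the first two levels). *)

(* Defs.v *)
From Stdlib Require Import List Sorted.
Import ListNotations.

Section PosetDefs.
Variable (P : Type) (le : P -> P -> Prop).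

Definition is_partial_order : Prop :=
  (forall x, le x x) /\
  (forall x y, le x y -> le y x -> x = y) /\
  (forall x y z, le x y -> le y z -> le x z).

Definition lt (x y : P) : Prop := le x y /\ x <> y.

Definition countable_set {T : Type} (A : T -> Prop) : Prop :=
  exists f : T -> nat, forall a b, A a -> A b -> f a = f b -> a = b.

Definition locally_countable : Prop :=
  forall x, countable_set (fun y => lt y x).

(* A subset A of T has size continuum: it is in bijection with
   the Cantor space nat -> bool (which has cardinality 2^aleph_0). *)
Definition size_continuum {T : Type} (A : T -> Prop) : Prop :=
  exists f : (nat -> bool) -> T,
    (forall s, A (f s)) /\
    (forall s t, f s = f t -> s = t) /\
    (forall a, A a -> exists s, f s = a).

Definition chain_of_length (n : nat) : Prop :=
  exists l : list P, length l = n /\ Sorted lt l.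

Definition has_height (n : nat) : Prop :=
  chain_of_length n /\ ~ chain_of_length (S n).

Definition level1 (x : P) : Prop := forall y, ~ lt y x.
Definition level2 (x : P) : Prop :=
  ~ level1 x /\ forall y, lt y x -> level1 y.
Definition level3 (x : P) : Prop :=
  ~ level1 x /\ ~ level2 x /\ forall y, lt y x -> level1 y \/ level2 y.

End PosetDefs.
Arguments is_partial_order {P} le.
Arguments lt {P} le x y.
Arguments locally_countable {P} le.
Arguments chain_of_length {P} le n.
Arguments has_height {P} le n.
Arguments level1 {P} le x.
Arguments level2 {P} le x.
Arguments level3 {P} le x.

(* Main.v *)
Require Import Defs.
From Stdlib Require Import List Sorted Cantor Lia FunctionalExtensionality ClassicalEpsilon Classical.
Import ListNotations.

Definition C := nat -> bool.
Definition toL1 (s : C) : C := fun n => match n with 0 => false | _ => s n end.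
Definition toL2 (s : C) : C := fun n => match n with 0 => true | 1 => false | _ => s n end.
Definition decode (s : C) (i : nat) : C := fun n => s (2 + to_nat (i, n)).
Definition encode (b0 b1 : bool) (g : nat -> C) : C :=
  fun m => match m with 0 => b0 | 1 => b1 | S (S m') => let (i, n) := of_nat m' in g i n end.
Definition ee (z : C) (i : nat) : C := match i with 0 => toL2 (decode z 0) | _ => decode z i end.

Definition strict (x y : C) : Prop :=
  (y 0 = true /\ y 1 = false /\ x 0 = false /\ exists i, x = toL1 (decode y i))
  \/ (y 0 = true /\ y 1 = true /\
      (((x 0 = false \/ x 1 = false) /\ exists i, x = ee y i)
       \/ (x 0 = false /\ exists i j, ee y i 0 = true /\ ee y i 1 = false /\ x = toL1 (decode (ee y i) j)))).

Definition leP (x y : C) : Prop := x = y \/ strict x y.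

Definition tg (x : C) : nat := if x 0 then (if x 1 then 3 else 2) else 1.

Lemma strict_tg x y : strict x y -> tg x < tg y.
Proof.
  unfold strict, tg.
  intros [[H0 [H1 [H2 _]]]|[H0 [H1 [[[H2|H2] _]|[H2 _]]]]]; rewrite ?H0, ?H1, ?H2;
  try (destruct (x 1)); try (destruct (x 0)); lia.
Qed.

Lemma tg_bound x : 1 <= tg x <= 3.
Proof. unfold tg; destruct (x 0), (x 1); lia. Qed.

Lemma lt_strict x y : lt leP x y <-> strict x y.
Proof.
  unfold lt, leP; split.
  - intros [[->|H] Hn]; [congruence|exact H].
  - intros H; split; [now right|]. intros ->. apply strict_tg in H; lia.
Qed.

Lemma po : is_partial_order leP.
Proof.
  unfold is_partial_order, leP; split; [|split].
  - intros; now left.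
  - intros x y [H|H] [H'|H']; auto.
    apply strict_tg in H; apply strict_tg in H'; lia.
  - intros x y z [->|H] [<-|H']; auto. right.
    pose proof (strict_tg _ _ H) as T1. pose proof (strict_tg _ _ H') as T2.
    pose proof (tg_bound x).
    destruct H' as [[A0 [A1 [A2 _]]]|[A0 [A1 [[_ [i Hi]]|[_ [i [j [B0 [B1 Hj]]]]]]]]].
    + exfalso. destruct H as [[C0 _]|[C0 _]]; congruence.
    + destruct H as [[C0 [C1 [C2 [k Hk]]]]|[C0 [C1 _]]].
      * right. split; [exact A0|]. split; [exact A1|]. right. split; [exact C2|].
        exists i, k. subst y. repeat split; auto.
      * exfalso. unfold tg in T2. rewrite A0, A1, C0, C1 in T2. lia.


    + exfalso. subst y. unfold tg at 2 in T1. simpl in T1. lia.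

Qed.

Lemma L1_iff x : level1 leP x <-> x 0 = false.
Proof.
  unfold level1; split.
  - intros H. destruct (x 0) eqn:E0; auto. exfalso.
    destruct (x 1) eqn:E1.
    + apply (H (toL1 (decode (ee x 0) 0))). apply lt_strict. right.
      split; auto. split; auto. right. split; [reflexivity|]. exists 0, 0.
      repeat split.
    + apply (H (toL1 (decode x 0))). apply lt_strict. left. repeat split; auto.
      exists 0; reflexivity.
  - intros H y Hy. apply lt_strict, strict_tg in Hy. pose proof (tg_bound y).
    unfold tg at 2 in Hy. rewrite H in Hy. lia.
Qed.

Lemma L2_iff x : level2 leP x <-> x 0 = true /\ x 1 = false.
Proof.
  unfold level2; split.
  - intros [H1 H2]. rewrite L1_iff in H1. destruct (x 0) eqn:E0; [|congruence].
    split; auto. destruct (x 1) eqn:E1; auto. exfalso.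
    assert (Hs : strict (ee x 0) x).
    { right. split; auto. split; auto. left. split; [right; reflexivity|]. exists 0; reflexivity. }
    apply lt_strict in Hs. apply H2 in Hs. rewrite L1_iff in Hs. discriminate.
  - intros [A B]. split.
    + rewrite L1_iff; congruence.
    + intros y Hy. apply lt_strict, strict_tg in Hy. pose proof (tg_bound y).
      rewrite L1_iff. unfold tg at 2 in Hy. rewrite A, B in Hy.
      unfold tg in Hy. destruct (y 0); auto. destruct (y 1); lia.
Qed.

Lemma L3_of x : x 0 = true -> x 1 = true -> level3 leP x.
Proof.
  intros A B. unfold level3. split; [|split].
  - rewrite L1_iff; congruence.
  - rewrite L2_iff; intuition congruence.
  - intros y Hy. apply lt_strict, strict_tg in Hy. pose proof (tg_bound y).
    rewrite L1_iff, L2_iff. unfold tg at 2 in Hy. rewrite A, B in Hy.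
    unfold tg in Hy. destruct (y 0); auto. destruct (y 1); [lia|auto].
Qed.

Lemma decode_encode b0 b1 g i : decode (encode b0 b1 g) i = g i.
Proof.
  apply functional_extensionality; intro n. unfold decode, encode. change (2 + to_nat (i, n)) with (S (S (to_nat (i, n)))). cbv iota beta.
  rewrite cancel_of_to. reflexivity.
Qed.

Lemma countable_range {T} (A : T -> Prop) (g : nat -> T) :
  (forall a, A a -> exists i, g i = a) -> countable_set A.
Proof.
  intros H. exists (fun a => epsilon (inhabits 0) (fun i => g i = a)).
  intros a b Ha Hb E.
  pose proof (epsilon_spec (inhabits 0) (fun i => g i = a) (H a Ha)) as Ea.
  pose proof (epsilon_spec (inhabits 0) (fun i => g i = b) (H b Hb)) as Eb.
  simpl in *. rewrite E in Ea. congruence.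
Qed.

Lemma loc : locally_countable leP.
Proof.
  intro y.
  apply countable_range with
    (g := fun k => match of_nat k with
                   | (0, i) => toL1 (decode y i)
                   | (S j, 0) => ee y j
                   | (S j, S i) => toL1 (decode (ee y j) i) end).
  intros a Ha. apply lt_strict in Ha.
  destruct Ha as [[_ [_ [_ [i Hi]]]]|[_ [_ [[_ [i Hi]]|[_ [i [j [_ [_ Hj]]]]]]]]].
  - exists (to_nat (0, i)). rewrite cancel_of_to. auto.
  - exists (to_nat (S i, 0)). rewrite cancel_of_to. auto.
  - exists (to_nat (S i, S j)). rewrite cancel_of_to. auto.
Qed.

Lemma height : has_height leP 3.
Proof.
  split.
  - set (a := fun _ : nat => false).
    set (b := encode true false (fun _ => a)).
    set (c := encode true true (fun _ => b)).
    exists [a; b; c]. split; [reflexivity|].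
    assert (Hab : lt leP a b).
    { apply lt_strict. left. repeat split. exists 0. unfold b. rewrite decode_encode.
      apply functional_extensionality; intros [|n]; reflexivity. }
    assert (Hbc : lt leP b c).
    { apply lt_strict. right. repeat split. left. split; [right; reflexivity|].
      exists 1. unfold c, ee. rewrite decode_encode. reflexivity. }
    apply Sorted_cons; [apply Sorted_cons; [apply Sorted_cons; constructor|constructor; exact Hbc]|constructor; exact Hab].
  - intros [l [Hl Hs]].
    assert (Tr : forall x y z, lt leP x y -> lt leP y z -> lt leP x z).
    { intros x y z H1 H2. destruct po as [_ [As Tr]]. destruct H1, H2.
      split; [eauto|]. intros ->.
      apply H0. apply As; eauto. }
    apply Sorted_StronglySorted in Hs; [|exact Tr].
    destruct l as [|a [|b [|c [|d [|? ?]]]]]; simpl in Hl; try discriminate.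
    inversion Hs as [|? ? S1 F1]; subst. inversion S1 as [|? ? S2 F2]; subst.
    inversion S2 as [|? ? S3 F3]; subst.
    inversion F1 as [|? ? Hab F1']; subst. inversion F2 as [|? ? Hbc F2']; subst.
    inversion F3 as [|? ? Hcd F3']; subst.
    apply lt_strict, strict_tg in Hab, Hbc, Hcd. pose proof (tg_bound a). pose proof (tg_bound d). lia.
Qed.

Definition shift (s : C) : C := fun n => match n with 0 => false | S m => s m end.

Theorem lemma3p2 :
  exists (P : Type) (le : P -> P -> Prop),
    is_partial_order le /\
    (* (1) *)
    locally_countable le /\ size_continuum (fun _ : P => True) /\
    has_height le 3 /\
    (* (2) *)
    size_continuum (level1 le) /\
    (* (3) *)
    (forall S : P -> Prop,
        (forall x, S x -> level1 le x) -> countable_set S ->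
        exists u, level2 le u /\ forall x, S x -> le x u) /\
    (* (4) *)
    (forall (Q : list P) (q : P),
        (forall x, In x Q -> level1 le x \/ level2 le x) ->
        level2 le q -> ~ In q Q ->
        exists r, level3 le r /\ (forall x, In x Q -> le x r) /\ ~ le q r).
Proof.
  exists C, leP. split; [exact po|]. split; [exact loc|]. split.
  { exists (fun s => s). repeat split; auto. intros a _. exists a; auto. }
  split; [exact height|]. split.
  { exists shift. split; [|split].
    - intros s. apply L1_iff. reflexivity.
    - intros s t E. apply functional_extensionality; intro n.
      exact (equal_f E (S n)).
    - intros a Ha. apply L1_iff in Ha. exists (fun n => a (S n)).
      apply functional_extensionality; intros [|n]; simpl; auto. }
  split.
  { intros S HS [f Hf].
    destruct (classic (exists x0, S x0)) as [[x0 Hx0]|Hno].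
    - set (g := fun n => epsilon (inhabits x0) (fun x => S x /\ f x = n)).
      exists (encode true false g). split; [apply L2_iff; split; reflexivity|].
      intros x Hx. right. left. repeat split.
      + apply L1_iff, HS, Hx.
      + exists (f x). rewrite decode_encode.
        pose proof (epsilon_spec (inhabits x0) (fun y => S y /\ f y = f x) (ex_intro _ x (conj Hx eq_refl))) as [E1 E2].
        fold (g (f x)) in E1, E2.
        assert (g (f x) = x) as -> by (apply Hf; auto).
        assert (Hxz : x 0 = false) by (apply L1_iff, HS, Hx).
        apply functional_extensionality; intros [|n]; simpl; auto.

    - exists (encode true false (fun _ _ => false)). split; [apply L2_iff; split; reflexivity|].
      intros x Hx. exfalso; eauto. }
  intros Q q HQ Hq HnQ. apply L2_iff in Hq as [Q0 Q1].
  set (q' := toL2 (fun n => negb (q n))).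
  assert (Hq' : q' <> q).
  { intro E. pose proof (equal_f E 2) as E2. unfold q', toL2 in E2. destruct (q 2); discriminate. }
  set (g := fun i => match i with 0 => q' | S k => nth k Q q' end).
  set (r := encode true true g).
  assert (Er : forall i, ee r i = g i).
  { intros [|i]; unfold ee, r; rewrite decode_encode; auto.
    simpl. apply functional_extensionality; intros [|[|n]]; reflexivity. }
  exists r. split; [apply L3_of; reflexivity|]. split.
  - intros x Hx. right. right. split; [reflexivity|]. split; [reflexivity|].
    left. split.
    + destruct (HQ x Hx) as [H|H]; [apply L1_iff in H; auto|apply L2_iff in H; tauto].
    + destruct (In_nth Q x q' Hx) as [k [_ Hk]]. exists (S k). rewrite Er. simpl. auto.
  - intros [E|H].
    + subst r. pose proof (equal_f E 1) as E1. simpl in E1. congruence.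
    + destruct H as [[_ [R1 _]]|[_ [_ [[_ [i Hi]]|[H0 _]]]]]; [discriminate| |congruence].
      rewrite Er in Hi. destruct i as [|k]; simpl in Hi; [congruence|].
      destruct (Compare_dec.lt_dec k (length Q)) as [H|H].
      * apply HnQ. rewrite Hi. apply nth_In; auto.
      * rewrite nth_overflow in Hi; [congruence|lia].
Qed.
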